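(* Let $g(x_0,\dots,x_m)$ be a nonsingular $m$-stage FSR (characteristic function) and $f(x_0,\dots,x_m)=g(x_0,\dots,x_m)\oplus f_3(x_1,\dots,x_{m-1})$, where $f_3:\{0,1\}^{m-1}\to\{0,1\}$. Let $\lambda:\{0,1\}^m\to\{0,1\}$ satisfy: (a) $|\{v\in\Omega_m(c):\lambda(v)=1\}|\le1$ for every $c\in\Omega(g)$; (b) $\lambda(v)\cdot\lambda(v')=0$ for every $v\in\{0,1\}^m$; (c) for every $u\in\{0,1\}^{m-1}$ with $f_3(u)=1$ there is $b\in\{0,1\}$ with $\lambda(b\parallel u)=1$. Let $D$ be the directed graph with vertex set $\Omega(g)$ having an arc from $c_1$ to $c_2$ iff there exists $v\in\Omega_m(c_1)$ with $f_3(\mathrm{lbit}_{m-1}(v))=1$, $\lambda(v)=1$ and $v'\in\Omega_m(c_2)$. If $D$ is acyclic, then: (i) for every $d\in\Omega(f)$ there is a weakly connected component $\mathcal C$ of $D$ such that $\Omega_m(d)=\bigcup_{c\in\mathcal C}\Omega_m(c)$; (ii) if $h$ is a subFSR of $f$, then $\Omega(h)\subseteq\Omega(g)$.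
   Context: An $m$-stage FSR with feedback logic $f_1$ has characteristic function $f(x_0,\dots,x_m)=x_m\oplus f_1(x_0,\dots,x_{m-1})$, state transformation $F(x_0,\dots,x_{m-1})=(x_1,\dots,x_{m-1},f_1(x_0,\dots,x_{m-1}))$, and generates the sequences $s$ with $f(s(t),\dots,s(t+m))=0$ for all $t$; it is nonsingular if $F$ is bijective. A periodic sequence $s$ of least period $p$ determines the cycle $[s(0),\dots,s(p-1)]$ (shifts give the same cycle); $\Omega(f)$ is the set of cycles of sequences generated by $f$, and $\Omega_k(c)=\{(s(i),s((i+1)\bmod p),\dots,s((i+k-1)\bmod p)):0\le i<p\}$. For $v\in\{0,1\}^m$, $v'=v\oplus(1,0,\dots,0)$; $\mathrm{lbit}_{m-1}(v)$ is the vector of the last $m-1$ coordinates of $v$; $b\parallel u$ is concatenation. An $k$-stage FSR $h$ is a subFSR of the $m$-stage FSR $f$ if $k<m$ and every sequence generated by $h$ is generated by $f$. A weakly connected component of a directed graph is a connected component of the underlying undirected graph. *)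

(* Defs.v *)
From mathcomp Require Import all_boot.
From Stdlib Require Import Relations.Relation_Operators.
Set Implicit Arguments. Unset Strict Implicit. Unset Printing Implicit Defensive.

(* A k-stage FSR is represented by its feedback logic f1 : {0,1}^k -> {0,1}. *)

Definition state (s : nat -> bool) (t k : nat) : k.-tuple bool :=
  [tuple s (t + j) | j < k].

Definition charfun k (f1 : k.-tuple bool -> bool) (x : k.+1.-tuple bool) : bool :=
  tnth x ord_max (+) f1 [tuple tnth x (widen_ord (leqnSn k) j) | j < k].

Definition generates k (f1 : k.-tuple bool -> bool) (s : nat -> bool) : Prop :=
  forall t, charfun f1 (state s t k.+1) = false.

Definition statetrans k (f1 : k.-tuple bool -> bool) (x : k.-tuple bool)
  : k.-tuple bool :=
  [tuple (if (j.+1 < k)%N then nth false x j.+1 else f1 x) | j < k].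

Definition nonsingular k (f1 : k.-tuple bool -> bool) : Prop :=
  bijective (statetrans f1).

Definition least_period (s : nat -> bool) (p : nat) : Prop :=
  (0 < p)%N /\ (forall t, s (t + p) = s t) /\
  (forall q, (0 < q)%N -> (forall t, s (t + q) = s t) -> (p <= q)%N).

(* cycles are represented by seq bool, identified up to shifts (rotations) *)
Definition same_cycle (c d : seq bool) : Prop := exists i, rot i c = d.

Definition Omega k (f1 : k.-tuple bool -> bool) (c : seq bool) : Prop :=
  exists s p, generates f1 s /\ least_period s p /\ same_cycle (mkseq s p) c.

Definition Omega_k k (c : seq bool) : {set k.-tuple bool} :=
  [set [tuple nth false c ((i + j) %% size c) | j < k] | i : 'I_(size c)].

Definition flip0 k (v : k.+1.-tuple bool) : k.+1.-tuple bool :=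
  cons_tuple (~~ thead v) (behead_tuple v).

Definition lbit k (v : k.+1.-tuple bool) : k.-tuple bool := behead_tuple v.

Definition mid k (x : k.+2.-tuple bool) : k.-tuple bool :=
  [tuple nth false x j.+1 | j < k].

(* arcs of the graph D (m = n+1) *)
Definition Darc n (g1 : n.+1.-tuple bool -> bool) (f3 : n.-tuple bool -> bool)
  (lam : n.+1.-tuple bool -> bool) (c1 c2 : seq bool) : Prop :=
  Omega g1 c1 /\ Omega g1 c2 /\
  exists v, v \in Omega_k n.+1 c1 /\ f3 (lbit v) /\ lam v /\ flip0 v \in Omega_k n.+1 c2.

Definition acyclic (R : seq bool -> seq bool -> Prop) : Prop :=
  forall c, ~ clos_trans (seq bool) R c c.

(* weak connectivity in the underlying undirected graph; representatives of
   the same cycle are the same vertex *)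
Definition weak_conn (R : seq bool -> seq bool -> Prop) : seq bool -> seq bool -> Prop :=
  clos_refl_sym_trans (seq bool) (fun a b => R a b \/ same_cycle a b).

(* Main.v *)
Require Import Defs.
From mathcomp Require Import all_boot.
From mathcomp Require Import zify.
From Stdlib Require Import Relations.Relation_Operators.
Set Implicit Arguments. Unset Strict Implicit. Unset Printing Implicit Defensive.

Lemma tnth_state s t k (j : 'I_k) : tnth (state s t k) j = s (t + j).
Proof. by rewrite /state tnth_mktuple. Qed.

Lemma nth_state s t k j : j < k -> nth false (state s t k) j = s (t + j).
Proof. by move=> hj; rewrite -(tnth_nth _ _ (Ordinal hj)) tnth_state. Qed.

Lemma charfun_state k (h : k.-tuple bool -> bool) s t :
  charfun h (state s t k.+1) = s (t + k) (+) h (state s t k).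
Proof.
rewrite /charfun tnth_state /=; congr (_ (+) h _).
by apply: eq_from_tnth => j; rewrite tnth_mktuple !tnth_state.
Qed.

Lemma generatesP k (h : k.-tuple bool -> bool) s :
  generates h s <-> forall t, s (t + k) = h (state s t k).
Proof.
split=> H t; first by have := H t; rewrite charfun_state; case: (s _); case: (h _).
by rewrite charfun_state H; case: (h _).
Qed.

Lemma tnth_statetrans k (h : k.-tuple bool -> bool) x (j : 'I_k) :
  tnth (statetrans h x) j = if j.+1 < k then nth false x j.+1 else h x.
Proof. by rewrite /statetrans tnth_mktuple. Qed.

Lemma nth_statetrans n (h : n.+1.-tuple bool -> bool) x j :
  j < n -> nth false (statetrans h x) j = nth false x j.+1.
Proof.
move=> hj; have hj' : j < n.+1 by lia.
by rewrite -(tnth_nth _ _ (Ordinal hj')) tnth_statetrans /= ifT.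
Qed.

Lemma state_gen k (h : k.-tuple bool -> bool) s t :
  generates h s -> state s t.+1 k = statetrans h (state s t k).
Proof.
move/generatesP=> H; apply: eq_from_tnth => j.
rewrite tnth_statetrans tnth_state.
case: ifP => hj; first by rewrite nth_state // addSnnS.
have -> : t.+1 + j = t + k by have := ltn_ord j; lia.
by rewrite H.
Qed.

Lemma state_iter k (h : k.-tuple bool -> bool) s t :
  generates h s -> state s t k = iter t (statetrans h) (state s 0 k).
Proof.
move=> H; elim: t => [//|t IH]; by rewrite (state_gen _ H) IH.
Qed.

Definition seqof n (P : n.+1.-tuple bool -> n.+1.-tuple bool) x t :=
  nth false (iter t P x) 0.

Lemma nth_iter n (h : n.+1.-tuple bool -> bool) j x :
  j <= n -> nth false (iter j (statetrans h) x) 0 = nth false x j.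
Proof.
elim: j x => [//|j IH] x hj.
by rewrite iterSr IH ?nth_statetrans //; lia.
Qed.

Lemma state_seqof n (h : n.+1.-tuple bool -> bool) x t :
  state (seqof (statetrans h) x) t n.+1 = iter t (statetrans h) x.
Proof.
apply: eq_from_tnth => j; rewrite tnth_state /seqof addnC iterD nth_iter.
  by rewrite (tnth_nth false).
by have := ltn_ord j; lia.
Qed.

Lemma seqof_gen n (h : n.+1.-tuple bool -> bool) x :
  generates h (seqof (statetrans h) x).
Proof.
apply/generatesP => t; rewrite state_seqof /seqof -addSnnS addnC iterD nth_iter //.
by rewrite iterS -(tnth_nth _ _ ord_max) tnth_statetrans ltnn.
Qed.

Definition win k (a : seq bool) x : k.-tuple bool :=
  [tuple nth false a ((x + j) %% size a) | j < k].

Lemma Omega_kP k a v : 0 < size a -> (v \in Omega_k k a <-> exists x, v = win k a x).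
Proof.
move=> ha; split; first by case/imsetP => i _ ->; exists i.
case=> x ->; case: a ha => [//|b a] _.
apply/imsetP; exists (Ordinal (ltn_pmod x (isT : 0 < size (b :: a)))) => //.
by apply: eq_from_tnth => j; rewrite !tnth_mktuple /= modnDml.
Qed.

Lemma nth_rot (a : seq bool) i y : i <= size a -> y < size a ->
  nth false (rot i a) y = nth false a ((y + i) %% size a).
Proof.
move=> hi hy; rewrite /rot nth_cat size_drop.
case: ifP => h.
  by rewrite nth_drop modn_small; [congr nth; lia | lia].
rewrite nth_take; last by lia.
have -> : (y + i) %% size a = y - (size a - i).
  have -> : y + i = (y - (size a - i)) + size a by lia.
  by rewrite modnDr modn_small //; lia.
by [].
Qed.

Lemma win_rot k (a : seq bool) i x : i <= size a ->
  win k (rot i a) x = win k a (x + i).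
Proof.
move=> hi; apply: eq_from_tnth => j; rewrite !tnth_mktuple size_rot.
case: a hi => [|b a] hi; first by rewrite !nth_nil.
rewrite nth_rot ?ltn_pmod // modnDml; congr nth; congr modn; lia.
Qed.

Lemma Omega_k_rot k (a : seq bool) i v :
  v \in Omega_k k (rot i a) <-> v \in Omega_k k a.
Proof.
have [hi|hi] := leqP i (size a); last by rewrite rot_oversize //; lia.
case: a hi => [|b a] hi; first by [].
rewrite !Omega_kP ?size_rot //; split; case=> x ->.
  by exists (x + i); rewrite win_rot.
exists (x + (size (b :: a) - i)); rewrite win_rot //.
apply: eq_from_tnth => j; rewrite !tnth_mktuple.
have -> : x + (size (b :: a) - i) + i + j = (x + j) + size (b :: a) by lia.
by rewrite modnDr.
Qed.

Lemma per_mod (s : nat -> bool) p : (forall t, s (t + p) = s t) ->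
  forall y, s (y %% p) = s y.
Proof.
move=> H y; rewrite {2}(divn_eq y p); elim: (y %/ p) => [|q IH]; first by rewrite mul0n.
have -> : q.+1 * p + y %% p = (q * p + y %% p) + p by rewrite mulSn; lia.
by rewrite H.
Qed.

Lemma win_mkseq k (s : nat -> bool) p x : 0 < p -> (forall t, s (t + p) = s t) ->
  win k (mkseq s p) x = state s x k.
Proof.
move=> hp H; apply: eq_from_tnth => j; rewrite tnth_mktuple tnth_state size_mkseq.
by rewrite nth_mkseq ?ltn_pmod // per_mod.
Qed.

Lemma Omega_k_seq k (s : nat -> bool) p i v : 0 < p -> (forall t, s (t + p) = s t) ->
  v \in Omega_k k (rot i (mkseq s p)) <-> exists t, v = state s t k.
Proof.
move=> hp H; rewrite Omega_k_rot Omega_kP ?size_mkseq //.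
by split; case=> x ->; exists x; rewrite win_mkseq.
Qed.

Lemma Omega_orbit n (h : n.+1.-tuple bool -> bool) c : Omega h c ->
  exists w, forall v, v \in Omega_k n.+1 c <-> fconnect (statetrans h) w v.
Proof.
case=> s [p [hg [[hp [hper _]] [i <-]]]].
exists (state s 0 n.+1) => v; rewrite Omega_k_seq //; split.
  by case=> t ->; rewrite (state_iter t hg); apply: fconnect_iter.
by move=> hc; exists (findex (statetrans h) (state s 0 n.+1) v);
  rewrite (state_iter (findex _ _ v) hg) iter_findex.
Qed.

Definition cyc n (h : n.+1.-tuple bool -> bool) x :=
  mkseq (seqof (statetrans h) x) (order (statetrans h) x).

Lemma cycP n (h : n.+1.-tuple bool -> bool) x : injective (statetrans h) ->
  Omega h (cyc h x) /\
  (forall v, v \in Omega_k n.+1 (cyc h x) <-> fconnect (statetrans h) x v).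
Proof.
move=> inj.
have hper : forall t, seqof (statetrans h) x (t + order (statetrans h) x) =
   seqof (statetrans h) x t.
  by move=> t; rewrite /seqof iterD iter_order.
have hp := order_gt0 (statetrans h) x.
split.
  exists (seqof (statetrans h) x), (order (statetrans h) x); split.
    exact: seqof_gen.
  split; last by exists 0; rewrite rot0.
  split=> //; split=> // q hq Hq.
  have e : iter q (statetrans h) x = x.
    have e0 := state_seqof h x 0; have eq := state_seqof h x q.
    rewrite -eq; rewrite /= in e0; rewrite -[in RHS]e0.
    by apply: eq_from_tnth => j; rewrite !tnth_state add0n addnC Hq.
  rewrite leqNgt; apply/negP => hlt.
  have := findex_iter hlt; rewrite e findex0; lia.
move=> v; rewrite /cyc -(rot0 (mkseq _ _)) Omega_k_seq //; split.
  by case=> t ->; rewrite state_seqof; apply: fconnect_iter.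
move=> hc; exists (findex (statetrans h) x v).
by rewrite state_seqof iter_findex.
Qed.

Lemma nth_flip0 n (v : n.+1.-tuple bool) j : nth false (flip0 v) j.+1 = nth false v j.+1.
Proof. by rewrite /flip0 /= nth_behead. Qed.

Lemma flip0K n (v : n.+1.-tuple bool) : flip0 (flip0 v) = v.
Proof.
apply: val_inj; rewrite /flip0 /= negbK.
case: v => [[|a s] hs] //=.
Qed.

Lemma lbit_flip0 n (v : n.+1.-tuple bool) : lbit (flip0 v) = lbit v.
Proof. by apply: val_inj. Qed.

Lemma flip0_neq n (v : n.+1.-tuple bool) : flip0 v != v.
Proof.
apply/eqP => /(congr1 (fun t : n.+1.-tuple bool => thead t)).
by rewrite /flip0 theadE; case: (thead v).
Qed.

Lemma st_eq_flip n (h : n.+1.-tuple bool -> bool) v :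
  h (flip0 v) = h v -> statetrans h (flip0 v) = statetrans h v.
Proof.
move=> e; apply: eq_from_tnth => j; rewrite !tnth_statetrans.
by case: ifP => _ //; rewrite nth_flip0.
Qed.

Lemma g1_flip n (g1 : n.+1.-tuple bool -> bool) v : injective (statetrans g1) ->
  g1 (flip0 v) = ~~ g1 v.
Proof.
move=> inj; case e: (g1 (flip0 v)); case e': (g1 v) => //.
- have := flip0_neq v; by rewrite (inj _ _ (st_eq_flip (etrans e (esym e')))) eqxx.
- have := flip0_neq v; by rewrite (inj _ _ (st_eq_flip (etrans e (esym e')))) eqxx.
Qed.

Lemma f1_eq n (g1 f1 : n.+1.-tuple bool -> bool) (f3 : n.-tuple bool -> bool) :
  (forall x : n.+2.-tuple bool, charfun f1 x = charfun g1 x (+) f3 (mid x)) ->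
  forall v, f1 v = g1 v (+) f3 (lbit v).
Proof.
move=> Hf v.
pose x : n.+2.-tuple bool := [tuple (if j < n.+1 then nth false v j else false) | j < n.+2].
have ei : [tuple tnth x (widen_ord (leqnSn n.+1) j) | j < n.+1] = v.
  apply: eq_from_tnth => j; rewrite !tnth_mktuple /= ltn_ord.
  by rewrite (tnth_nth false).
have em : mid x = lbit v.
  apply: eq_from_tnth => j; rewrite /mid tnth_mktuple.
  have hj : j.+1 < n.+2 by have := ltn_ord j; lia.
  rewrite -(tnth_nth _ _ (Ordinal hj)) tnth_mktuple /= ltnS ltn_ord.
  by rewrite (tnth_nth false) /lbit /= nth_behead.
have := Hf x; rewrite /charfun ei em.
by case: (tnth x ord_max); case: (f1 v); case: (g1 v); case: (f3 _).
Qed.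

Lemma F_eq n (g1 f1 : n.+1.-tuple bool -> bool) (f3 : n.-tuple bool -> bool) :
  injective (statetrans g1) ->
  (forall v, f1 v = g1 v (+) f3 (lbit v)) ->
  forall v, statetrans f1 v =
    if f3 (lbit v) then statetrans g1 (flip0 v) else statetrans g1 v.
Proof.
move=> inj Hf v; apply: eq_from_tnth => j.
case e: (f3 (lbit v)); rewrite !tnth_statetrans; case: ifP => _;
  rewrite ?nth_flip0 // Hf e ?g1_flip //; by case: (g1 v).
Qed.

Definition Erel n (G : n.+1.-tuple bool -> n.+1.-tuple bool) (f3 : n.-tuple bool -> bool)
  (lam : n.+1.-tuple bool -> bool) : rel (n.+1.-tuple bool) :=
  fun b a => [exists v, [&& fconnect G b v, f3 (lbit v), lam v & fconnect G (flip0 v) a]].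

Lemma lam_or n (f3 : n.-tuple bool -> bool) (lam : n.+1.-tuple bool -> bool) :
  (forall u : n.-tuple bool, f3 u -> exists b, lam (cons_tuple b u)) ->
  forall v, f3 (lbit v) -> lam v || lam (flip0 v).
Proof.
move=> Hc v hv; case: (Hc _ hv) => b.
have -> : cons_tuple b (lbit v) = if b == thead v then v else flip0 v.
  case: eqP => [->|hb]; last first.
    by rewrite /flip0; congr cons_tuple; case: (thead v) hb; case: b.
  by rewrite [in RHS](tuple_eta v); apply: val_inj.
by case: ifP => _ ->; rewrite ?orbT.
Qed.

Lemma core n (G F : n.+1.-tuple bool -> n.+1.-tuple bool) (f3 : n.-tuple bool -> bool)
  (lam : n.+1.-tuple bool -> bool) :
  injective G ->
  (forall v, F v = if f3 (lbit v) then G (flip0 v) else G v) ->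
  (forall x y, fconnect G x y -> lam x -> lam y -> x = y) ->
  (forall u : n.-tuple bool, f3 u -> exists b, lam (cons_tuple b u)) ->
  (forall x z, Erel G f3 lam z x -> connect (Erel G f3 lam) x z -> False) ->
  forall x, fconnect F x (G x).
Proof.
move=> inj HF Hone Hc Hac.
set E := Erel G f3 lam.
pose mu x := #|[set u | connect E u x]|.
have mult : forall x z, E z x -> mu z < mu x.
  move=> x z ezx; apply: proper_card; apply/properP; split.
    apply/subsetP => u; rewrite !inE => h.
    by apply: connect_trans h (connect1 ezx).
  exists x; rewrite !inE ?connect0 //.
  by apply/negP => h; apply: (Hac x z ezx h).
have L : forall x, (forall y, fconnect G x y -> y != x -> f3 (lbit y) -> ~~ lam y) ->
    fconnect F (G x) x.
  move=> x; have [N hN] : exists N, mu x < N by exists (mu x).+1.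
  elim: N x hN => [//|N IH] x hN hyp.
  have step : forall j, 0 < j -> j <= order G x -> fconnect F (G x) (iter j G x).
    elim=> [//|j IHj] _ hj.
    case: j IHj hj => [|j] IHj hj; first by rewrite connect0.
    have := IHj isT (ltnW hj); set y := iter j.+1 G x => hy.
    rewrite iterS -/y; apply: connect_trans hy _.
    have hxy : fconnect G x y by apply: fconnect_iter.
    have hyx : y != x.
      apply/eqP => e; have := findex_iter hj; rewrite -/y e findex0; lia.
    case ey: (f3 (lbit y)); last by rewrite -[G y]/(if false then G (flip0 y) else G y) -ey -HF; apply: fconnect1.
    have nly := hyp y hxy hyx ey.
    have lz : lam (flip0 y) by have := lam_or Hc ey; rewrite (negbTE nly).
    set z := flip0 y in lz *.
    have ezx : E z x.
      apply/existsP; exists z; rewrite connect0 /z lbit_flip0 ey lz flip0K /=.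
      by rewrite fconnect_sym.
    have hz : fconnect F (G z) z.
      apply: IH; first by have := mult _ _ ezx; lia.
      move=> w hw hwz _; apply/negP => lw; move: hwz.
      by rewrite (Hone _ _ hw lz lw) eqxx.
    have e1 : F y = G z by rewrite HF ey.
    have e2 : F z = G y by rewrite HF /z lbit_flip0 ey flip0K.
    rewrite -e2; apply: connect_trans (connect_trans _ hz) (fconnect1 _ _).
    by rewrite -e1; apply: fconnect1.
  by have := step _ (order_gt0 G x) (leqnn _); rewrite iter_order.
move=> x; case ex: (f3 (lbit x)); last first.
  by rewrite -[G x]/(if false then G (flip0 x) else G x) -ex -HF; apply: fconnect1.
have Finj : injective F.
  move=> u w; rewrite !HF => e.
  case eu: (f3 (lbit u)); case ew: (f3 (lbit w)); rewrite eu ew in e;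
    move/inj: e => e.
  - by rewrite -(flip0K u) e flip0K.
  - by move: ew; rewrite -e lbit_flip0 eu.
  - by move: eu; rewrite e lbit_flip0 ew.
  - exact: e.
pose a := if lam x then x else flip0 x.
have la : lam a by rewrite /a; case: ifP => // hl; have := lam_or Hc ex; rewrite hl.
have ea : f3 (lbit a) by rewrite /a; case: ifP; rewrite ?lbit_flip0.
have Ha : fconnect F (G a) a.
  apply: L => y hy hya _; apply/negP => ly; move: hya.
  by rewrite (Hone _ _ hy la ly) eqxx.
have Fb : F (flip0 a) = G a by rewrite HF lbit_flip0 ea flip0K.
have hba : fconnect F (flip0 a) a by rewrite -Fb in Ha; apply: connect_trans (fconnect1 _ _) Ha.
have Fa : F a = G (flip0 a) by rewrite HF ea.
have [hx|hx] : x = a \/ x = flip0 a.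
  by rewrite /a; case: ifP; [left|right; rewrite flip0K].
- rewrite hx -Fb; apply: connect_trans (fconnect1 _ _).
  by rewrite fconnect_sym.
- by rewrite hx -Fa; apply: connect_trans hba (fconnect1 _ _).
Qed.

Lemma GF n (G F : n.+1.-tuple bool -> n.+1.-tuple bool) :
  (forall x, fconnect F x (G x)) -> forall x y, fconnect G x y -> fconnect F x y.
Proof.
move=> C x y h; rewrite -(iter_findex h); elim: (findex G x y) => [|k IH].
  exact: connect0.
by rewrite iterS; apply: connect_trans IH (C _).
Qed.

Lemma flipF n (G F : n.+1.-tuple bool -> n.+1.-tuple bool) (f3 : n.-tuple bool -> bool) :
  injective G ->
  (forall v, F v = if f3 (lbit v) then G (flip0 v) else G v) ->
  (forall x, fconnect F x (G x)) ->
  forall x, f3 (lbit x) -> fconnect F x (flip0 x).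
Proof.
move=> inj HF C x hx.
have e : F x = G (flip0 x) by rewrite HF hx.
apply: connect_trans (fconnect1 _ _) _; rewrite e.
by apply: (GF C); rewrite fconnect_sym //; apply: fconnect1.
Qed.

Lemma CT n (g1 : n.+1.-tuple bool -> bool) (f3 : n.-tuple bool -> bool)
  (lam : n.+1.-tuple bool -> bool) (inj : injective (statetrans g1)) :
  forall p x y, path (Erel (statetrans g1) f3 lam) x p ->
   Erel (statetrans g1) f3 lam (last x p) y ->
   clos_trans _ (Darc g1 f3 lam) (cyc g1 x) (cyc g1 y).
Proof.
have D : forall u w, Erel (statetrans g1) f3 lam u w -> Darc g1 f3 lam (cyc g1 u) (cyc g1 w).
  move=> u w /existsP [v /and4P [h1 h2 h3 h4]].
  have [Ou Mu] := cycP u inj; have [Ow Mw] := cycP w inj.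
  rewrite /Darc; split; first done; split; first done; exists v; split; first by apply/Mu.
  split; first done; split; first done; by apply/Mw; rewrite fconnect_sym.
elim=> [|a p IH] x y /=; first by move=> _ e; apply: t_step; apply: D.
case/andP=> e1 hp e2; apply: t_trans (IH _ _ hp e2).
by apply: t_step; apply: D.
Qed.

Theorem lemma7 (n : nat) (g1 f1 : n.+1.-tuple bool -> bool)
  (f3 : n.-tuple bool -> bool) (lam : n.+1.-tuple bool -> bool) :
  nonsingular g1 ->
  (forall x : n.+2.-tuple bool, charfun f1 x = charfun g1 x (+) f3 (mid x)) ->
  (forall c, Omega g1 c -> (#|[set v in Omega_k n.+1 c | lam v]| <= 1)%N) ->
  (forall v : n.+1.-tuple bool, lam v && lam (flip0 v) = false) ->
  (forall u : n.-tuple bool, f3 u -> exists b, lam (cons_tuple b u)) ->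
  acyclic (Darc g1 f3 lam) ->
  (forall d, Omega f1 d ->
     exists c0, Omega g1 c0 /\
       forall v, v \in Omega_k n.+1 d <->
         exists c, Omega g1 c /\ weak_conn (Darc g1 f3 lam) c0 c /\ v \in Omega_k n.+1 c)
  /\
  (forall k (h1 : k.-tuple bool -> bool), (k < n.+1)%N ->
     (forall s, generates h1 s -> generates f1 s) ->
     forall c, Omega h1 c -> Omega g1 c).
Proof.
move=> HG Hf Ha Hb Hc Hac.
set G := statetrans g1; set F := statetrans f1.
have inj : injective G by case: HG => g GK _; apply: can_inj GK.
have Hf1 := f1_eq Hf.
have HF : forall v, F v = if f3 (lbit v) then G (flip0 v) else G v := F_eq inj Hf1.
have Hone : forall x y, fconnect G x y -> lam x -> lam y -> x = y.
  move=> x y hxy lx ly; apply/eqP; apply: contraT => hne.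
  have [Om Mem] := cycP x inj.
  have := Ha _ Om; set A := [set v in _ | _].
  have : [set x; y] \subset A.
    apply/subsetP => u; rewrite !inE => /orP [] /eqP ->; rewrite ?lx ?ly andbT;
      apply/Mem => //; exact: connect0.
  by move/subset_leq_card; rewrite cards2 hne => h1 h2; have := leq_trans h1 h2.
have Hac' : forall x z, Erel G f3 lam z x -> connect (Erel G f3 lam) x z -> False.
  move=> x z ezx /connectP [p hp ez].
  apply: (Hac (cyc g1 x)); apply: (CT inj hp); by rewrite -ez.
have C := core inj HF Hone Hc Hac'.
have GF' := GF C.
have flF := flipF inj HF C.
split.
  move=> d Od; have [w Mw] := Omega_orbit Od.
  have [O0 M0] := cycP w inj.
  exists (cyc g1 w); split=> // v; split.
    move/Mw => hv; rewrite -(iter_findex hv); elim: (findex F w v) => [|k IH].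
      exists (cyc g1 w); split=> //; split; first exact: rst_refl.
      by apply/M0; apply: connect0.
    case: IH => c [Oc [wc hc]]; have [wcc Mc] := Omega_orbit Oc.
    set u := iter k F w in hc *; rewrite iterS -/u.
    case eu: (f3 (lbit u)).
      have [O2 M2] := cycP (flip0 u) inj.
      exists (cyc g1 (flip0 u)); split=> //; split; last first.
        by rewrite -/F (HF u) eu; apply/M2; apply: fconnect1.
      apply: rst_trans wc _.
      have := lam_or Hc eu; case/orP => hl.
        apply: rst_step; left; split=> //; split=> //; exists u; split=> //.
        split=> //; split=> //; apply/M2; exact: connect0.
      apply: rst_sym; apply: rst_step; left; split=> //; split=> //.
      exists (flip0 u); split; first by apply/M2; apply: connect0.
      by rewrite lbit_flip0 eu flip0K.
    exists c; split=> //; split=> //; rewrite -/F (HF u) eu; apply/Mc.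
    by apply: connect_trans (fconnect1 _ _); apply/Mc.
  case=> c [Oc [wc hc]].
  pose J c := forall v, v \in Omega_k n.+1 c -> fconnect F w v.
  have transfer : forall a b x, J a -> x \in Omega_k n.+1 a -> f3 (lbit x) ->
      flip0 x \in Omega_k n.+1 b -> Omega g1 b -> J b.
    move=> a b x Ja hx ex hfx Ob u hu.
    have [wb Mb] := Omega_orbit Ob.
    apply: connect_trans (connect_trans (Ja _ hx) (flF _ ex)) _.
    apply: GF'; move/Mb: hfx => h1; move/Mb: hu => h2.
    by apply: connect_trans h2; rewrite fconnect_sym.
  have eqv : forall a b, weak_conn (Darc g1 f3 lam) a b -> (J a <-> J b).
    move=> a b; elim=> {a b} [a b [[Oa [Ob [x [hx [ex [_ hfx]]]]]]|[i <-]] | a | a b _ [IH1 IH2]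
       | a b c' _ [IH1 IH2] _ [IH3 IH4]].
    - split=> Jab; first exact: transfer Jab hx ex hfx Ob.
      apply: transfer Jab hfx _ _ Oa; by rewrite ?lbit_flip0 ?flip0K.
    - by split=> Ja v0 hv; apply: Ja; move: hv; rewrite Omega_k_rot.
    - by [].
    - by split.
    - by split=> h; [apply: IH3; apply: IH1 | apply: IH2; apply: IH4].
  have J0 : J (cyc g1 w) by move=> u /M0; apply: GF'.
  apply/Mw; exact: (proj1 (eqv _ _ wc) J0 v hc).
move=> k h1 hk Hsub c [s [p [gh [lp [i <-]]]]].
have gf := Hsub s gh.
have nof : forall t, f3 (lbit (state s t n.+1)) = false.
  move=> t; apply: negbTE; apply/negP => ht.
  set v := state s t n.+1 in ht.
  have hv : fconnect F (state s 0 n.+1) (flip0 v).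
    apply: connect_trans (flF _ ht).
    by rewrite /v (state_iter t gf); apply: fconnect_iter.
  have ev : flip0 v = state s (findex F (state s 0 n.+1) (flip0 v)) n.+1.
    by rewrite (state_iter _ gf) iter_findex.
  set t' := findex _ _ _ in ev.
  have hh : forall t0, s (t0 + n.+1) = h1 (state s (t0 + n.+1 - k) k).
    move=> t0; have := (proj1 (generatesP h1 s) gh (t0 + n.+1 - k)).
    by have -> : t0 + n.+1 - k + k = t0 + n.+1 by lia.
  have ew : state s (t + n.+1 - k) k = state s (t' + n.+1 - k) k.
    apply: eq_from_tnth => j; rewrite !tnth_state.
    have hj := ltn_ord j.
    have e1 : t + n.+1 - k + j = t + (n - k + j).+1 by lia.
    have e2 : t' + n.+1 - k + j = t' + (n - k + j).+1 by lia.
    have hq : (n - k + j).+1 < n.+1 by lia.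
    rewrite e1 e2 -(nth_state s t hq) -(nth_state s t' hq) -ev.
    by rewrite /v nth_flip0.
  have := hh t; rewrite ew -hh.
  have := proj1 (generatesP f1 s) gf t; have := proj1 (generatesP f1 s) gf t'.
  move=> -> ->; rewrite -ev -/v !Hf1 lbit_flip0 ht g1_flip //.
  by case: (g1 v).
exists s, p; split; last by split=> //; exists i.
apply/generatesP => t; rewrite (proj1 (generatesP f1 s) gf t) Hf1 nof.
by case: (g1 _).
Qed.
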